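(* Let $({\cal X},+)$ be a countable commutative group with at least two elements, let ${\bold H}(i)={\cal X}$ for all $i\in\omega$ (so ${\cal X}^\omega=\prod_{i\in\omega}{\bold H}(i)$ is a commutative group under coordinatewise addition), and let $(K,\Sigma,\Sigma^\bot)$ be a semi--creating triple for ${\bold H}$. (1) If $(K,\Sigma,\Sigma^\bot)$ is directly $+$--invariant, then the ideal $\mathbb{I}_\infty(K,\Sigma,\Sigma^\bot)$ is translation--invariant, i.e. $A+x\in\mathbb{I}_\infty(K,\Sigma,\Sigma^\bot)$ whenever $A\in\mathbb{I}_\infty(K,\Sigma,\Sigma^\bot)$ and $x\in{\cal X}^\omega$. (2) If $(K,\Sigma,\Sigma^\bot)$ is directly permutation--invariant, then $\mathbb{I}_\infty(K,\Sigma,\Sigma^\bot)$ is permutation--invariant, i.e. for every permutation $\pi$ of $\omega$ and every $A\in\mathbb{I}_\infty(K,\Sigma,\Sigma^\bot)$, the set $\{x\in{\cal X}^\omega: x\circ\pi\in A\}$ belongs to $\mathbb{I}_\infty(K,\Sigma,\Sigma^\bot)$.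
   Context: Semi--creatures, semi--creating triples, the forcing $\mathbb{Q}^+_\infty(K,\Sigma,\Sigma^\bot)$, $\dot W$ and the ideal $\mathbb{I}_\infty(K,\Sigma,\Sigma^\bot)$ are as follows. A semi--creature for ${\bold H}$ is a quadruple $t=(\mathbf{dom}[t],\mathbf{sval}[t],\mathbf{nor}[t],\mathbf{dis}[t])$ with $\mathbf{dom}[t]$ a non-empty finite subset of $\omega$, $\emptyset\neq\mathbf{sval}[t]\subseteq\prod_{i\in\mathbf{dom}[t]}{\bold H}(i)$, $\mathbf{nor}[t]\in[0,\infty)\cup\{\infty\}$, $\mathbf{dis}[t]$ hereditarily countable, and $\mathbf{sval}[t]=\prod_{i\in\mathbf{dom}[t]}{\bold H}(i)$ iff $\mathbf{nor}[t]=\infty$. A semi--composition operation $\Sigma$ on a set $K$ of semi--creatures maps finite subsets of $K$ to subsets of $K$ with: (a) if $s\in\Sigma(\mathcal S_s)$ for all $s\in\mathcal S$ then $\Sigma(\mathcal S)\subseteq\Sigma(\bigcup_s\mathcal S_s)$; (b) $t\in\Sigma(\{t\})$, $\Sigma(\emptyset)=\emptyset$; (c) if $t\in\Sigma(\mathcal S)$ then $\mathbf{dom}[t]=\bigcup_{s\in\mathcal S}\mathbf{dom}[s]$, $v\restriction\mathbf{dom}[s]\in\mathbf{sval}[s]$ for $v\in\mathbf{sval}[t]$, $s\in\mathcal S$, and distinct members of $\mathcal S$ have disjoint domains. A semi--decomposition operation $\Sigma^\bot$ assigns to each $t\in K$ a non-empty family of finite subsets of $K$ with: (a) if $\{s_0,\dots,s_k\}\in\Sigma^\bot(t)$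 and $\mathcal S_i\in\Sigma^\bot(s_i)$ then $\bigcup_i\mathcal S_i\in\Sigma^\bot(t)$; (b) $\{t\}\in\Sigma^\bot(t)$; (c) if $\mathcal S\in\Sigma^\bot(t)$ then $\mathbf{dom}[t]=\bigcup_{s\in\mathcal S}\mathbf{dom}[s]$ and each $v\in\prod_{i\in\mathbf{dom}[t]}{\bold H}(i)$ with $v\restriction\mathbf{dom}[s]\in\mathbf{sval}[s]$ for all $s\in\mathcal S$ is in $\mathbf{sval}[t]$. Conditions of $\mathbb{Q}^+_\infty(K,\Sigma,\Sigma^\bot)$ are sequences $p=(w^p,t^p_0,t^p_1,\dots)$ with $w^p$ a finite function, $w^p(i)\in{\bold H}(i)$, $t^p_i\in K$, $\mathrm{dom}(w^p)$ and the $\mathbf{dom}[t^p_i]$ partitioning $\omega$, $\mathbf{nor}[t^p_i]\neq\infty$ and $\mathbf{nor}[t^p_i]\to\infty$. $p\leq q$ iff $q$ arises from $p$ by finitely many operations: deciding the value (for a finite $A\subseteq\omega$, extend $w$ to $w^*$ with domain $\mathrm{dom}(w)\cup\bigcup_{i\in A}\mathbf{dom}[t_i]$, $w^*\restriction\mathbf{dom}[t_i]\in\mathbf{sval}[t_i]$, and keep the $t_i$, $i\notin A$); applying $\Sigma$ (replace by $t^*_i\in\Sigma(\{t_j:j\in A_i\})$ for pairwise disjoint finite $A_i$); applying $\Sigma^\bot$ (replace $t_i$ by the members of some element of $\Sigma^\bot(t_i)$, using disjoint non-empty index sets). $\dot W$ names $\bigcup\{w^p:p\in\text{generic filter}\}$;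 $\mathbb{I}_\infty(K,\Sigma,\Sigma^\bot)$ is the ideal on $\prod_i{\bold H}(i)$ (product of discrete topologies) generated by the Borel sets $B$ with $\Vdash\dot W\notin B$. $(K,\Sigma,\Sigma^\bot)$ is directly $+$--invariant if for each $t\in K$ and $v\in{\cal X}^{\mathbf{dom}[t]}$ there is a unique $s=t+v\in K$ with $\mathbf{dom}[s]=\mathbf{dom}[t]$, $\mathbf{nor}[s]=\mathbf{nor}[t]$, $\mathbf{sval}[s]=\{w+v:w\in\mathbf{sval}[t]\}$, and moreover $\Sigma^\bot(t+v)=\{\{s+(v\restriction\mathbf{dom}[s]):s\in\mathcal S\}:\mathcal S\in\Sigma^\bot(t)\}$ and $\Sigma(\{t+(v\restriction\mathbf{dom}[t]):t\in\mathcal S\})=\{s+v:s\in\Sigma(\mathcal S)\}$ for non-empty finite $\mathcal S\subseteq K$ and $v:\bigcup_{s\in\mathcal S}\mathbf{dom}[s]\to{\cal X}$. It is directly permutation--invariant if for each $t\in K$ and injection $\pi:X\to\omega$ with $\mathbf{dom}[t]\subseteq X\subseteq\omega$ there is a unique $s=\pi(t)\in K$ with $\mathbf{dom}[s]=\pi[\mathbf{dom}[t]]$, $\mathbf{nor}[s]=\mathbf{nor}[t]$, $\mathbf{sval}[s]=\{w\circ\pi^{-1}:w\in\mathbf{sval}[t]\}$, and moreover $\Sigma^\bot(\pi(t))=\{\{\pi(s):s\in\mathcal S\}:\mathcal S\in\Sigma^\bot(t)\}$ and $\Sigma(\{\pi(t):t\in\mathcal S\})=\{\pi(s):s\in\Sigma(\mathcal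 S)\}$ for injections $\pi:\omega\to\omega$. *)

(* Defs.v *)
From HB Require Import structures.
From mathcomp Require Import all_boot all_algebra.
From mathcomp Require Import finmap.
From Stdlib Require Reals.
From Stdlib Require Import Relations List.
Notation R := Reals.Rdefinitions.R.
Notation Rle := Reals.Rdefinitions.Rle.
Set Implicit Arguments. Unset Strict Implicit. Unset Printing Implicit Defensive.
Import GRing.Theory.
Local Open Scope fset_scope.

Section SemiCreatures.
Variable X : zmodType.   (* H(i) = X for all i *)
Variable D : Type.

(* finite partial functions omega -> X; the domain is {i | v i <> None} *)
Definition pfun := nat -> option X.

(* v is an element of prod_{i in A} H(i) *)
Definition full_on (A : {fset nat}) (v : pfun) : Prop :=
  forall i, v i <> None <-> i \in A.

Definition restr (v : pfun) (A : {fset nat}) : pfun :=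
  fun i => if i \in A then v i else None.

Definition padd (w v : pfun) : pfun :=
  fun i => match w i, v i with Some a, Some b => Some (a + b)%R | _, _ => None end.

(* quadruples (dom, sval, nor, dis); nor = None encodes infinity *)
Record creature := Creature {
  cdom : {fset nat};
  csval : pfun -> Prop;
  cnor : option R;
  cdis : D }.

Definition semi_creature (t : creature) : Prop :=
  cdom t != fset0 /\
  (exists v, csval t v) /\
  (forall v, csval t v -> full_on (cdom t) v) /\
  (forall r, cnor t = Some r -> Rle Reals.Rdefinitions.R0 r) /\
  ((forall v, full_on (cdom t) v -> csval t v) <-> cnor t = None).

Definition cset := creature -> Prop.

Definition cfinite (S : cset) : Prop :=
  exists l : list creature, forall s, S s <-> In s l.

Definition csingle (t : creature) : cset := fun s => s = t.
Definition cempty : cset := fun _ => False.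
Definition bigU (S : cset) (F : creature -> cset) : cset :=
  fun x => exists s, S s /\ F s x.
Definition csub (S T : cset) : Prop := forall s, S s -> T s.

Variable K : cset.

Definition semi_composition (Sig : cset -> cset) : Prop :=
  (forall S, cfinite S -> csub S K -> csub (Sig S) K) /\
  (forall (S : cset) (F : creature -> cset), cfinite S -> csub S K ->
     (forall s, S s -> cfinite (F s) /\ csub (F s) K /\ Sig (F s) s) ->
     csub (Sig S) (Sig (bigU S F))) /\
  (forall t, K t -> Sig (csingle t) t) /\
  (forall t, ~ Sig cempty t) /\
  (forall S, cfinite S -> csub S K -> forall t, Sig S t ->
     (forall i, i \in cdom t <-> exists s, S s /\ i \in cdom s) /\
     (forall v, csval t v -> forall s, S s -> csval s (restr v (cdom s))) /\
     (forall s s', S s -> S s' -> s <> s' ->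
        forall i, i \in cdom s -> i \in cdom s' -> False)).

Definition semi_decomposition (SigB : creature -> cset -> Prop) : Prop :=
  (forall t, K t -> exists S, SigB t S) /\
  (forall t S, K t -> SigB t S -> cfinite S /\ csub S K) /\
  (forall t S (F : creature -> cset), K t -> SigB t S ->
     (forall s, S s -> SigB s (F s)) -> SigB t (bigU S F)) /\
  (forall t, K t -> SigB t (csingle t)) /\
  (forall t S, K t -> SigB t S ->
     (forall i, i \in cdom t <-> exists s, S s /\ i \in cdom s) /\
     (forall v, full_on (cdom t) v ->
        (forall s, S s -> csval s (restr v (cdom s))) -> csval t v)).

Definition semi_creating_triple (Sig : cset -> cset) (SigB : creature -> cset -> Prop) :=
  (forall t, K t -> semi_creature t) /\ semi_composition Sig /\ semi_decomposition SigB.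

Record cond := Cond { cw : pfun; ct : nat -> creature }.

Definition is_cond (p : cond) : Prop :=
  (exists A : {fset nat}, full_on A (cw p)) /\
  (forall i, K (ct p i)) /\
  (forall j, cw p j <> None \/ exists i, j \in cdom (ct p i)) /\
  (forall i j, cw p j <> None -> j \in cdom (ct p i) -> False) /\
  (forall i i' j, i <> i' -> j \in cdom (ct p i) -> j \in cdom (ct p i') -> False) /\
  (forall i, cnor (ct p i) <> None) /\
  (forall M : R, exists N, forall i, N <= i -> forall r, cnor (ct p i) = Some r -> Rle M r).

Definition pextends (w w' : pfun) : Prop := forall i a, w i = Some a -> w' i = Some a.

Definition step_decide (p q : cond) : Prop :=
  exists A : {fset nat},
    (forall j, cw q j <> None <-> (cw p j <> None \/ exists i, i \in A /\ j \in cdom (ct p i))) /\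
    pextends (cw p) (cw q) /\
    (forall i, i \in A -> csval (ct p i) (restr (cw q) (cdom (ct p i)))) /\
    exists f : nat -> nat, (forall k, f k < f k.+1) /\
      (forall i, i \notin A <-> exists k, f k = i) /\
      (forall k, ct q k = ct p (f k)).

Definition step_sigma (Sig : cset -> cset) (p q : cond) : Prop :=
  cw q = cw p /\ exists A : nat -> {fset nat},
    (forall i i' j, i <> i' -> j \in A i -> j \in A i' -> False) /\
    (forall j, exists i, j \in A i) /\
    (forall i, Sig (fun s => exists j, j \in A i /\ s = ct p j) (ct q i)).

Definition step_sigmaB (SigB : creature -> cset -> Prop) (p q : cond) : Prop :=
  cw q = cw p /\ exists B : nat -> {fset nat},
    (forall i i' j, i <> i' -> j \in B i -> j \in B i' -> False) /\
    (forall j, exists i, j \in B i) /\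
    (forall i, B i != fset0) /\
    (forall i, SigB (ct p i) (fun s => exists j, j \in B i /\ s = ct q j)).

Variable Sig : cset -> cset.
Variable SigB : creature -> cset -> Prop.

Definition qstep (p q : cond) : Prop :=
  is_cond p /\ is_cond q /\
  (step_decide p q \/ step_sigma Sig p q \/ step_sigmaB SigB p q).

(* p <= q : q is stronger than p *)
Definition qle (p q : cond) : Prop :=
  is_cond p /\ is_cond q /\ clos_refl_trans cond qstep p q.

Definition dense_below (p : cond) (P : cond -> Prop) : Prop :=
  forall q, qle p q -> exists r, qle q r /\ P r.

(* Borel codes for subsets of X^omega (product of discrete topologies) *)
Inductive bcode :=
  | BAt : nat -> X -> bcode
  | BCompl : bcode -> bcode
  | BUnion : (nat -> bcode) -> bcode.

Fixpoint bset (c : bcode) : (nat -> X) -> Prop :=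
  match c with
  | BAt i a => fun x => x i = a
  | BCompl c' => fun x => ~ bset c' x
  | BUnion f => fun x => exists n, bset (f n) x
  end.

(* the forcing relation  p ||- "W in [[c]]"  where W = U { w^p : p in G } *)
Fixpoint forces (p : cond) (c : bcode) : Prop :=
  match c with
  | BAt i a => dense_below p (fun q => cw q i = Some a)
  | BCompl c' => forall q, qle p q -> ~ forces q c'
  | BUnion f => dense_below p (fun q => exists n, forces q (f n))
  end.

Definition forced_out (c : bcode) : Prop :=
  forall p, is_cond p -> forces p (BCompl c).

(* the ideal I_infty(K,Sig,SigB): generated by Borel B with ||- W \notin B *)
Definition in_ideal (A : (nat -> X) -> Prop) : Prop :=
  exists l : list bcode, (forall c, In c l -> forced_out c) /\
    forall x, A x -> exists c, In c l /\ bset c x.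

Definition plus_invariant : Prop :=
  exists plus : creature -> pfun -> creature,
    (forall t v, K t -> full_on (cdom t) v ->
       K (plus t v) /\ cdom (plus t v) = cdom t /\ cnor (plus t v) = cnor t /\
       (forall u, csval (plus t v) u <-> exists w, csval t w /\ u = padd w v) /\
       (forall s, K s -> cdom s = cdom t -> cnor s = cnor t ->
          (forall u, csval s u <-> exists w, csval t w /\ u = padd w v) -> s = plus t v)) /\
    (forall t v, K t -> full_on (cdom t) v -> forall S',
       SigB (plus t v) S' <->
       exists S, SigB t S /\ S' = (fun s' => exists s, S s /\ s' = plus s (restr v (cdom s)))) /\
    (forall S v, cfinite S -> csub S K -> (exists s, S s) ->
       (forall i, v i <> None <-> exists s, S s /\ i \in cdom s) ->
       forall t', Sig (fun s' => exists s, S s /\ s' = plus s (restr v (cdom s))) t' <->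
                  exists s, Sig S s /\ t' = plus s v).

(* u = w o pi^{-1}, for w with domain A *)
Definition pcomp_inv (pi : nat -> nat) (A : {fset nat}) (w u : pfun) : Prop :=
  (forall i, i \in A -> u (pi i) = w i) /\
  (forall j, u j <> None -> exists i, i \in A /\ pi i = j).

Definition perm_invariant : Prop :=
  exists act : (nat -> nat) -> creature -> creature,
    (forall t (Xs : nat -> Prop) (pi : nat -> nat), K t ->
       (forall i, i \in cdom t -> Xs i) ->
       (forall i j, Xs i -> Xs j -> pi i = pi j -> i = j) ->
       K (act pi t) /\
       (forall j, j \in cdom (act pi t) <-> exists i, i \in cdom t /\ pi i = j) /\
       cnor (act pi t) = cnor t /\
       (forall u, csval (act pi t) u <-> exists w, csval t w /\ pcomp_inv pi (cdom t) w u) /\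
       (forall s, K s ->
          (forall j, j \in cdom s <-> exists i, i \in cdom t /\ pi i = j) ->
          cnor s = cnor t ->
          (forall u, csval s u <-> exists w, csval t w /\ pcomp_inv pi (cdom t) w u) ->
          s = act pi t)) /\
    (forall pi : nat -> nat, injective pi ->
       (forall t, K t -> forall S',
          SigB (act pi t) S' <->
          exists S, SigB t S /\ S' = (fun s' => exists s, S s /\ s' = act pi s)) /\
       (forall S, cfinite S -> csub S K -> forall t',
          Sig (fun s' => exists s, S s /\ s' = act pi s) t' <->
          exists s, Sig S s /\ t' = act pi s)).

End SemiCreatures.

(* Main.v *)
Require Import Defs.
From HB Require Import structures.
From mathcomp Require Import all_boot all_algebra.
From mathcomp Require Import finmap.
From Stdlib Require Import Relations List.
From Stdlib Require Import FunctionalExtensionality PropExtensionality Classical.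
Set Implicit Arguments. Unset Strict Implicit. Unset Printing Implicit Defensive.
Local Open Scope fset_scope.
Import GRing.Theory.

Lemma inIn (T : eqType) (x : T) s : List.In x s <-> x \in s.
Proof. elim: s => [|a s IH] //=. rewrite seq.in_cons; split.
 case=> [->|H]; first by rewrite eqxx. by rewrite (proj1 IH H) orbT.
 case/orP => [/eqP->|H]; by [left|right; apply/IH]. Qed.

Section Gen.
Variables (X : zmodType) (D : Type) (K : cset X D) (Sig : cset X D -> cset X D)
  (SigB : creature X D -> cset X D -> Prop).
Variables (Phi Psi : cond X D -> cond X D).
Hypothesis HcPhi : forall p, is_cond K p -> is_cond K (Phi p).
Hypothesis HcPsi : forall p, is_cond K p -> is_cond K (Psi p).
Hypothesis HsPhi : forall p q, qstep K Sig SigB p q -> qstep K Sig SigB (Phi p) (Phi q).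
Hypothesis HsPsi : forall p q, qstep K Sig SigB p q -> qstep K Sig SigB (Psi p) (Psi q).
Hypothesis HPsiPhi : forall p, is_cond K p -> Psi (Phi p) = p.
Hypothesis HPhiPsi : forall p, is_cond K p -> Phi (Psi p) = p.
Variables (sg : nat -> nat) (gx : nat -> X -> X).
Hypothesis Hat : forall q i a, is_cond K q -> (cw (Phi q) (sg i) = Some (gx i a) <-> cw q i = Some a).

Fixpoint tau (c : bcode X) : bcode X :=
  match c with
  | BAt i a => BAt (sg i) (gx i a)
  | BCompl c' => BCompl (tau c')
  | BUnion f => BUnion (fun n => tau (f n))
  end.

Lemma qle_map (F : cond X D -> cond X D) :
  (forall p, is_cond K p -> is_cond K (F p)) ->
  (forall p q, qstep K Sig SigB p q -> qstep K Sig SigB (F p) (F q)) ->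
  forall p q, qle K Sig SigB p q -> qle K Sig SigB (F p) (F q).
Proof.
move=> Hc Hs p q [Hp [Hq Hpq]]; split; [by apply Hc|split; [by apply Hc|]].
elim: Hpq {Hp Hq} => [x y Hxy|x|x y z _ IH1 _ IH2].
- by apply rt_step, Hs.
- by apply rt_refl.
- by apply (rt_trans _ _ _ _ _ IH1 IH2).
Qed.

Let HlPhi := qle_map HcPhi HsPhi.
Let HlPsi := qle_map HcPsi HsPsi.

Lemma dense_tr (P P' : cond X D -> Prop) p : is_cond K p ->
  (forall r, is_cond K r -> (P r <-> P' (Phi r))) ->
  (dense_below K Sig SigB p P <-> dense_below K Sig SigB (Phi p) P').
Proof.
move=> Hp HP; split.
- move=> Hd q Hq.
  have Hqc : is_cond K q by case: Hq => _ [].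
  have := HlPsi Hq; rewrite HPsiPhi // => /Hd [r [Hr1 Hr2]].
  exists (Phi r); split.
  + by have := HlPhi Hr1; rewrite HPhiPsi.
  + apply/HP => //; by case: Hr1 => _ [].
- move=> Hd q Hq.
  have Hqc : is_cond K q by case: Hq => _ [].
  have [r [Hr1 Hr2]] := Hd _ (HlPhi Hq).
  have Hrc : is_cond K r by case: Hr1 => _ [].
  exists (Psi r); split.
  + by have := HlPsi Hr1; rewrite HPsiPhi.
  + apply/HP; [by apply HcPsi | by rewrite HPhiPsi].
Qed.

Lemma forces_tau c : forall p, is_cond K p ->
  (forces K Sig SigB p c <-> forces K Sig SigB (Phi p) (tau c)).
Proof.
elim: c => [i a|c IH|f IH] p Hp /=.
- apply dense_tr => // r Hr; by rewrite Hat.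
- split.
  + move=> H q Hq.
    have Hqc : is_cond K q by case: Hq => _ [].
    have := HlPsi Hq; rewrite HPsiPhi // => /H Hn Hf; apply: Hn.
    apply/IH; [by apply HcPsi | by rewrite HPhiPsi].
  + move=> H q Hq Hf.
    have Hqc : is_cond K q by case: Hq => _ [].
    apply: (H _ (HlPhi Hq)); by apply/IH.
- apply dense_tr => // r Hr; split.
  + by case=> n Hn; exists n; apply/IH.
  + by case=> n Hn; exists n; apply/IH.
Qed.

Lemma forced_out_tau c : forced_out K Sig SigB c -> forced_out K Sig SigB (tau c).
Proof.
move=> H p Hp.
have Hp' : is_cond K (Psi p) by apply HcPsi.
rewrite -(HPhiPsi Hp).
have := forces_tau (BCompl c) Hp'; simpl tau => <-.
by apply H.
Qed.

Lemma in_ideal_tau (A B : (nat -> X) -> Prop) :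
  (forall y, B y -> exists a, A a /\ forall c, bset c a -> bset (tau c) y) ->
  in_ideal K Sig SigB A -> in_ideal K Sig SigB B.
Proof.
move=> HB [l [Hl Hcov]]; exists (map tau l); split.
- move=> c /in_map_iff [c0 [<- Hc0]]; by apply forced_out_tau, Hl.
- move=> y /HB [a [Ha Hc]].
  have [c [Hcl Hca]] := Hcov a Ha.
  exists (tau c); split; [by apply in_map | by apply Hc].
Qed.
End Gen.

Section Common.
Variables (X : zmodType) (D : Type) (K : cset X D) (Sig : cset X D -> cset X D)
  (SigB : creature X D -> cset X D -> Prop).
Hypothesis Htr : semi_creating_triple K Sig SigB.

Lemma sval_full t v : K t -> csval t v -> full_on (cdom t) v.
Proof. case: Htr => H _ /H [_ [_ [H1 _]]]; exact: H1. Qed.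

Lemma cfinite_img (A : {fset nat}) (f : nat -> creature X D) :
  cfinite (fun s => exists j, j \in A /\ s = f j).
Proof.
exists (map f (enum_fset A)) => s; split.
- case=> j [Hj ->]; apply in_map; apply/inIn; exact Hj.
- case/in_map_iff=> j [<- Hj]; exists j; split => //; exact/inIn.
Qed.

Lemma set_eq_image (A : {fset nat}) (F : nat -> creature X D) (f : nat -> creature X D)
  (G : creature X D -> creature X D) :
  (forall j, j \in A -> F j = G (f j)) ->
  (fun s : creature X D => exists j, j \in A /\ s = F j) =
  (fun s' => exists s, (exists j, j \in A /\ s = f j) /\ s' = G s).
Proof.
move=> H; apply functional_extensionality => s; apply propositional_extensionality.
split.
- case=> j [Hj ->]; exists (f j); split; [by exists j | by apply H].
- case=> s0 [[j [Hj ->]] ->]; exists j; split => //; by rewrite H.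
Qed.

Lemma Sig_dom S t : cfinite S -> csub S K -> Sig S t ->
  forall i, i \in cdom t <-> exists s, S s /\ i \in cdom s.
Proof.
case: Htr => _ [[_ [_ [_ [_ H]]]] _] HS HK HSt.
by case: (H S HS HK t HSt).
Qed.

Lemma SigB_dom S t : K t -> SigB t S ->
  forall i, i \in cdom t <-> exists s, S s /\ i \in cdom s.
Proof.
case: Htr => _ [_ [_ [_ [_ [_ H]]]]] Kt HS.
by case: (H t S Kt HS).
Qed.

Lemma Sig_nonempty S t : Sig S t -> exists s, S s.
Proof.
move=> H; apply: NNPP => Hn.
have E : S = @cempty X D.
  apply functional_extensionality => s; apply propositional_extensionality.
  split => // Hs; apply Hn; by exists s.
case: Htr => _ [[_ [_ [_ [H4 _]]]] _]; apply: (H4 t); by rewrite -E.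
Qed.

Lemma Sig_csub S t : cfinite S -> csub S K -> Sig S t -> K t.
Proof. case: Htr => _ [[H _] _] HS HK; exact: H. Qed.

End Common.

Section Trans.
Variables (X : zmodType) (D : Type) (K : cset X D) (Sig : cset X D -> cset X D)
  (SigB : creature X D -> cset X D -> Prop).
Hypothesis Htr : semi_creating_triple K Sig SigB.
Variable plus : creature X D -> pfun X -> creature X D.
Hypothesis Hp1 : forall t v, K t -> full_on (cdom t) v ->
       K (plus t v) /\ cdom (plus t v) = cdom t /\ cnor (plus t v) = cnor t /\
       (forall u, csval (plus t v) u <-> exists w, csval t w /\ u = padd w v) /\
       (forall s, K s -> cdom s = cdom t -> cnor s = cnor t ->
          (forall u, csval s u <-> exists w, csval t w /\ u = padd w v) -> s = plus t v).
Hypothesis Hp2 : forall t v, K t -> full_on (cdom t) v -> forall S',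
       SigB (plus t v) S' <->
       exists S, SigB t S /\ S' = (fun s' => exists s, S s /\ s' = plus s (restr v (cdom s))).
Hypothesis Hp3 : forall S v, cfinite S -> csub S K -> (exists s, S s) ->
       (forall i, v i <> None <-> exists s, S s /\ i \in cdom s) ->
       forall t', Sig (fun s' => exists s, S s /\ s' = plus s (restr v (cdom s))) t' <->
                  exists s, Sig S s /\ t' = plus s v.

Definition xv (x : nat -> X) : pfun X := fun i => Some (x i).
Definition negx (x : nat -> X) : nat -> X := fun i => (- x i)%R.
Definition trc x t := plus t (restr (xv x) (cdom t)).
Definition trp x (p : cond X D) : cond X D :=
  Cond (padd (cw p) (xv x)) (fun i => trc x (ct p i)).

Lemma full_xv x A : full_on A (restr (xv x) A).
Proof. move=> i; rewrite /restr /xv; case: (i \in A) => //; split => //. Qed.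

Lemma restr_restr (v : pfun X) (A B : {fset nat}) :
  (forall i, i \in B -> i \in A) -> restr (restr v A) B = restr v B.
Proof.
move=> H; apply functional_extensionality => i; rewrite /restr.
case E: (i \in B) => //; by rewrite H.
Qed.

Lemma trc_K x t : K t -> K (trc x t).
Proof. move=> Kt; by case: (Hp1 Kt (full_xv x (cdom t))). Qed.
Lemma trc_dom x t : K t -> cdom (trc x t) = cdom t.
Proof. move=> Kt; by case: (Hp1 Kt (full_xv x (cdom t))) => _ []. Qed.
Lemma trc_nor x t : K t -> cnor (trc x t) = cnor t.
Proof. move=> Kt; by case: (Hp1 Kt (full_xv x (cdom t))) => _ [_ []]. Qed.
Lemma trc_sval x t u : K t ->
  (csval (trc x t) u <-> exists w, csval t w /\ u = padd w (restr (xv x) (cdom t))).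
Proof. move=> Kt; by case: (Hp1 Kt (full_xv x (cdom t))) => _ [_ [_ []]]. Qed.

Lemma padd_None w x j : padd w (xv x) j <> None <-> w j <> None.
Proof. rewrite /padd /xv; by case: (w j). Qed.

Lemma trp_cond x p : is_cond K p -> is_cond K (trp x p).
Proof.
case=> [[A HA] [HK [Hcov [Hd1 [Hd2 [Hn Hg]]]]]].
split; [|split; [|split; [|split; [|split; [|split]]]]] => /=.
- exists A => j; rewrite padd_None; exact: HA.
- move=> i; exact: trc_K.
- move=> j; rewrite padd_None; case: (Hcov j) => [H|[i Hi]]; [by left|right].
  exists i; by rewrite trc_dom.
- move=> i j; rewrite padd_None trc_dom //; exact: Hd1.
- move=> i i' j; rewrite !trc_dom //; exact: Hd2.
- move=> i; rewrite trc_nor //.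
- move=> M; case: (Hg M) => N HN; exists N => i Hi r; rewrite trc_nor //; exact: HN.
Qed.

Lemma restr_padd (w : pfun X) x (A : {fset nat}) :
  restr (padd w (xv x)) A = padd (restr w A) (restr (xv x) A).
Proof.
apply functional_extensionality => i; rewrite /restr /padd.
by case: (i \in A).
Qed.

Lemma trp_step x p q : qstep K Sig SigB p q -> qstep K Sig SigB (trp x p) (trp x q).
Proof.
case=> Hp [Hq Hs].
have HKp : forall i, K (ct p i) by case: Hp => _ [].
have HKq : forall i, K (ct q i) by case: Hq => _ [].
split; [exact: trp_cond|split; [exact: trp_cond|]].
case: Hs => [[A [H1 [H2 [H3 [f [Hf1 [Hf2 Hf3]]]]]]]|[[Hw [A [H1 [H2 H3]]]]|[Hw [B [H1 [H2 [H3 H4]]]]]]].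
- left; exists A; split; [|split; [|split]] => /=.
  + move=> j; rewrite !padd_None H1.
    split; case=> [H|[i [Hi Hj]]]; (try by left); right; exists i;
      by rewrite ?trc_dom in Hj *.
  + move=> i a; rewrite /padd /xv; case E: (cw p i) => [b|] // [<-].
    by rewrite (H2 _ _ E).
  + move=> i Hi; rewrite trc_dom // trc_sval //.
    exists (restr (cw q) (cdom (ct p i))); split; first exact: H3.
    exact: restr_padd.
  + exists f; do 2 split => //; move=> k /=; by rewrite Hf3.
- right; left; split; first by rewrite /= Hw.
  exists A; do 2 split => //.
  move=> i /=.
  set S := (fun s => exists j, j \in A i /\ s = ct p j).
  have HSf : cfinite S by apply cfinite_img.
  have HSK : csub S K by move=> s [j [_ ->]].
  have Hdom := Sig_dom Htr HSf HSK (H3 i).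
  rewrite (@set_eq_image X D (A i) (fun j => trc x (ct p j)) (ct p)
             (fun s => plus s (restr (restr (xv x) (cdom (ct q i))) (cdom s)))).
  + apply/Hp3 => //.
    * exact: (Sig_nonempty Htr (H3 i)).
    * move=> j; rewrite -Hdom /restr /xv; by case: (j \in cdom (ct q i)).
    * by exists (ct q i).
  + move=> j Hj; rewrite /trc restr_restr // => k Hk; apply/Hdom.
    by exists (ct p j); split => //; exists j.
- right; right; split; first by rewrite /= Hw.
  exists B; do 3 split => //.
  move=> i /=; rewrite /trc; apply/Hp2 => //; first exact: full_xv.
  exists (fun s => exists j, j \in B i /\ s = ct q j); split; first exact: H4.
  have Hdom := SigB_dom Htr (HKp i) (H4 i).
  apply: set_eq_image => j Hj; rewrite restr_restr // => k Hk; apply/Hdom.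
  by exists (ct q j); split => //; exists j.
Qed.

Lemma padd_cancel x (A : {fset nat}) w : full_on A w ->
  padd (padd w (restr (xv x) A)) (restr (xv (negx x)) A) = w.
Proof.
move=> Hw; apply functional_extensionality => i; rewrite /padd /restr /xv /negx.
case E: (i \in A).
- case Ew: (w i) => [a|] //; by rewrite addrK.
- case Ew: (w i) => [a|] //; exfalso.
  have : w i <> None by rewrite Ew.
  by move/Hw; rewrite E.
Qed.

Lemma padd_cancel' x w : padd (padd w (xv x)) (xv (negx x)) = w.
Proof.
apply functional_extensionality => i; rewrite /padd /xv /negx.
case: (w i) => [a|] //; by rewrite addrK.
Qed.

Lemma trc_inv x t : K t -> trc (negx x) (trc x t) = t.
Proof.
move=> Kt; rewrite /trc.
have Kt' := trc_K x Kt.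
have Hf := full_xv (negx x) (cdom (trc x t)).
case: (Hp1 Kt' Hf) => _ [_ [_ [_ Hu]]].
symmetry; apply: Hu => //.
- by rewrite trc_dom.
- by rewrite trc_nor.
- move=> u; rewrite trc_dom //; split.
  + move=> Hu'; exists (padd u (restr (xv x) (cdom t))); split.
    * apply/trc_sval => //; by exists u.
    * by rewrite padd_cancel //; exact: (sval_full Htr Kt Hu').
  + case=> w [/(trc_sval _ _ Kt) [w0 [Hw0 ->]] ->].
    by rewrite padd_cancel //; exact: (sval_full Htr Kt Hw0).
Qed.

Lemma negxK x : negx (negx x) = x.
Proof. apply functional_extensionality => i; by rewrite /negx opprK. Qed.

Lemma trp_inv x p : is_cond K p -> trp (negx x) (trp x p) = p.
Proof.
case: p => w c Hp; rewrite /trp /=.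
have HK : forall i, K (c i) by case: Hp => _ [].
rewrite padd_cancel'; congr Cond.
apply functional_extensionality => i; exact: trc_inv.
Qed.

Fixpoint bshift (x : nat -> X) (c : bcode X) : bcode X :=
  match c with
  | BAt i a => BAt i (a + x i)%R
  | BCompl c' => BCompl (bshift x c')
  | BUnion f => BUnion (fun n => bshift x (f n))
  end.

Lemma bset_shift x c a : bset (bshift x c) (fun i => a i + x i)%R <-> bset c a.
Proof.
elim: c => [i b|c IH|f IH] /=.
- split; [by move/addIr | by move->].
- by rewrite IH.
- split; case=> n Hn; exists n; exact/IH.
Qed.

Lemma trans_ideal x (A : (nat -> X) -> Prop) :
  in_ideal K Sig SigB A ->
  in_ideal K Sig SigB (fun y => exists a, A a /\ y = (fun i => (a i + x i)%R)).
Proof.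
have E : forall c, bshift x c = tau id (fun i a => a + x i)%R c.
  by elim=> [i a|c IH|f IH] //=; [rewrite IH | congr BUnion; apply functional_extensionality].
apply: (@in_ideal_tau X D K Sig SigB (trp x) (trp (negx x)) _ _ _ _ _ _ id (fun i a => a + x i)%R).
- exact: trp_cond.
- exact: trp_cond.
- exact: trp_step.
- exact: trp_step.
- exact: trp_inv.
- move=> p Hp; have := trp_inv (negx x) Hp; by rewrite negxK.
- move=> q i a Hq /=; rewrite /padd /xv; case: (cw q i) => [b|]; split => //.
  + move=> [] H; by rewrite (addIr _ H).
  + by case=> ->.
- move=> y [a [Ha ->]]; exists a; split => // c; rewrite -E => Hc; exact: (proj2 (bset_shift x c a) Hc).
Qed.

End Trans.

Section Perm.
Variables (X : zmodType) (D : Type) (K : cset X D) (Sig : cset X D -> cset X D)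
  (SigB : creature X D -> cset X D -> Prop).
Hypothesis Htr : semi_creating_triple K Sig SigB.
Variable act : (nat -> nat) -> creature X D -> creature X D.
Hypothesis Hq1 : forall t (Xs : nat -> Prop) (pi : nat -> nat), K t ->
       (forall i, i \in cdom t -> Xs i) ->
       (forall i j, Xs i -> Xs j -> pi i = pi j -> i = j) ->
       K (act pi t) /\
       (forall j, j \in cdom (act pi t) <-> exists i, i \in cdom t /\ pi i = j) /\
       cnor (act pi t) = cnor t /\
       (forall u, csval (act pi t) u <-> exists w, csval t w /\ pcomp_inv pi (cdom t) w u) /\
       (forall s, K s ->
          (forall j, j \in cdom s <-> exists i, i \in cdom t /\ pi i = j) ->
          cnor s = cnor t ->
          (forall u, csval s u <-> exists w, csval t w /\ pcomp_inv pi (cdom t) w u) ->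
          s = act pi t).
Hypothesis Hq2 : forall pi : nat -> nat, injective pi ->
       (forall t, K t -> forall S',
          SigB (act pi t) S' <->
          exists S, SigB t S /\ S' = (fun s' => exists s, S s /\ s' = act pi s)) /\
       (forall S, cfinite S -> csub S K -> forall t',
          Sig (fun s' => exists s, S s /\ s' = act pi s) t' <->
          exists s, Sig S s /\ t' = act pi s).

Section PG.
Variables (pi g : nat -> nat).
Hypotheses (Hpg : cancel pi g) (Hgp : cancel g pi).

Let Hinj : injective pi := can_inj Hpg.

Lemma act_spec t : K t ->
       K (act pi t) /\
       (forall j, j \in cdom (act pi t) <-> exists i, i \in cdom t /\ pi i = j) /\
       cnor (act pi t) = cnor t /\
       (forall u, csval (act pi t) u <-> exists w, csval t w /\ pcomp_inv pi (cdom t) w u) /\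
       (forall s, K s ->
          (forall j, j \in cdom s <-> exists i, i \in cdom t /\ pi i = j) ->
          cnor s = cnor t ->
          (forall u, csval s u <-> exists w, csval t w /\ pcomp_inv pi (cdom t) w u) ->
          s = act pi t).
Proof. move=> Kt; apply: (Hq1 (Xs := fun _ => True)) => // i j _ _; exact: Hinj. Qed.

Lemma act_K t : K t -> K (act pi t).
Proof. by case/act_spec. Qed.
Lemma act_dom t j : K t -> (j \in cdom (act pi t) <-> g j \in cdom t).
Proof.
case/act_spec => _ [H _]; rewrite H; split.
- by case=> i [Hi <-]; rewrite Hpg.
- move=> Hj; exists (g j); by rewrite Hgp.
Qed.
Lemma act_nor t : K t -> cnor (act pi t) = cnor t.
Proof. by case/act_spec => _ [_ []]. Qed.
Lemma act_sval t u : K t ->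
  (csval (act pi t) u <-> exists w, csval t w /\ pcomp_inv pi (cdom t) w u).
Proof. by case/act_spec => _ [_ [_ []]]. Qed.

Lemma pcomp_char (A : {fset nat}) (w u : pfun X) : full_on A w ->
  (pcomp_inv pi A w u <-> u = (fun j => w (g j))).
Proof.
move=> Hw; split.
- case=> H1 H2; apply functional_extensionality => j.
  case E: (g j \in A).
  + by rewrite -(H1 _ E) Hgp.
  + have -> : w (g j) = None.
      case Ew: (w (g j)) => [a|] //; exfalso.
      have : w (g j) <> None by rewrite Ew.
      by move/Hw; rewrite E.
    case Eu: (u j) => [a|] //; exfalso.
    have : u j <> None by rewrite Eu.
    case/H2 => i [Hi Hij]; move: E; by rewrite -Hij Hpg Hi.
- move->; split => [i Hi|j Hj]; first by rewrite Hpg.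
  exists (g j); split; last exact: Hgp.
  exact/Hw.
Qed.

Definition prp (p : cond X D) : cond X D :=
  Cond (fun j => cw p (g j)) (fun i => act pi (ct p i)).

Lemma prp_cond p : is_cond K p -> is_cond K (prp p).
Proof.
case=> [[A HA] [HK [Hcov [Hd1 [Hd2 [Hn Hgr]]]]]].
split; [|split; [|split; [|split; [|split; [|split]]]]] => /=.
- exists (pi @` A) => j; rewrite HA; split.
  + move=> Hj; apply/imfsetP; exists (g j) => //; by rewrite Hgp.
  + by case/imfsetP => i Hi ->; rewrite Hpg.
- move=> i; exact: act_K.
- move=> j; case: (Hcov (g j)) => [H|[i Hi]]; [by left|right].
  exists i; by rewrite act_dom.
- move=> i j; rewrite act_dom //; exact: Hd1.
- move=> i i' j; rewrite !act_dom //; exact: Hd2.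
- move=> i; rewrite act_nor //.
- move=> M; case: (Hgr M) => N HN; exists N => i Hi r; rewrite act_nor //; exact: HN.
Qed.

Lemma prp_step p q : qstep K Sig SigB p q -> qstep K Sig SigB (prp p) (prp q).
Proof.
case=> Hp [Hq Hs].
have HKp : forall i, K (ct p i) by case: Hp => _ [].
have HKq : forall i, K (ct q i) by case: Hq => _ [].
split; [exact: prp_cond|split; [exact: prp_cond|]].
case: Hs => [[A [H1 [H2 [H3 [f [Hf1 [Hf2 Hf3]]]]]]]|[[Hw [A [H1 [H2 H3]]]]|[Hw [B [H1 [H2 [H3 H4]]]]]]].
- left; exists A; split; [|split; [|split]] => /=.
  + move=> j; rewrite H1.
    split; case=> [H|[i [Hi Hj]]]; (try by left); right; exists i;
      by rewrite ?act_dom in Hj *.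
  + move=> i a; exact: H2.
  + move=> i Hi; apply/act_sval => //.
    exists (restr (cw q) (cdom (ct p i))); split; first exact: H3.
    apply/pcomp_char; first exact: (sval_full Htr (HKp i) (H3 i Hi)).
    apply functional_extensionality => j; rewrite /restr.
    have := act_dom j (HKp i).
    case: (j \in cdom (act pi (ct p i))); case: (g j \in cdom (ct p i)) => //.
    * by case=> H _; have := H isT.
    * by case=> _ H; have := H isT.
  + exists f; do 2 split => //; move=> k /=; by rewrite Hf3.
- right; left; split; first by rewrite /= Hw.
  exists A; do 2 split => //.
  move=> i /=.
  set S := (fun s => exists j, j \in A i /\ s = ct p j).
  have HSf : cfinite S by apply cfinite_img.
  have HSK : csub S K by move=> s [j [_ ->]].
  rewrite (@set_eq_image X D (A i) (fun j => act pi (ct p j)) (ct p) (act pi)) //.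
  apply/(proj2 (Hq2 Hinj)) => //; by exists (ct q i).
- right; right; split; first by rewrite /= Hw.
  exists B; do 3 split => //.
  move=> i /=; apply/(proj1 (Hq2 Hinj)) => //.
  exists (fun s => exists j, j \in B i /\ s = ct q j); split; first exact: H4.
  exact: set_eq_image.
Qed.

End PG.

Lemma act_inv pi g t : cancel pi g -> cancel g pi -> K t -> act g (act pi t) = t.
Proof.
move=> Hpg Hgp Kt.
have Kt' := act_K Hpg Kt.
case: (act_spec Hgp Kt') => _ [_ [_ [_ Hu]]].
symmetry; apply: Hu => //.
- move=> j; split.
  + move=> Hj; exists (pi j); split; last exact: Hpg.
    by rewrite (act_dom Hpg Hgp) // Hpg.
  + case=> i [Hi <-]; by rewrite (act_dom Hpg Hgp) in Hi.
- by rewrite !(act_nor Hpg).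
- move=> u; split.
  + move=> Hu'; exists (fun j => u (g j)); split.
    * apply/(act_sval Hpg) => //; exists u; split => //.
      exact: (proj2 (pcomp_char Hpg Hgp _ (sval_full Htr Kt Hu')) erefl).
    * apply: (proj2 (pcomp_char Hgp Hpg _ _)).
      - move=> j; rewrite (act_dom Hpg Hgp) //; exact: (sval_full Htr Kt Hu').
      - apply functional_extensionality => j; by rewrite Hpg.
  + case=> w [Hw Hwu].
    have Hfw := sval_full Htr Kt' Hw.
    move/(pcomp_char Hgp Hpg _ Hfw): Hwu => ->.
    case/(act_sval Hpg _ Kt): Hw => w0 [Hw0 /(pcomp_char Hpg Hgp _ (sval_full Htr Kt Hw0)) ->].
    have -> : (fun j => w0 (g (pi j))) = w0.
      apply functional_extensionality => j; by rewrite Hpg.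
    exact: Hw0.
Qed.

Lemma prp_inv pi g p : cancel pi g -> cancel g pi -> is_cond K p -> prp g pi (prp pi g p) = p.
Proof.
move=> Hpg Hgp; case: p => w c Hp; rewrite /prp /=.
have HK : forall i, K (c i) by case: Hp => _ [].
congr Cond; apply functional_extensionality => i; first by rewrite Hpg.
exact: act_inv.
Qed.

Fixpoint bperm (pi : nat -> nat) (c : bcode X) : bcode X :=
  match c with
  | BAt i a => BAt (pi i) a
  | BCompl c' => BCompl (bperm pi c')
  | BUnion f => BUnion (fun n => bperm pi (f n))
  end.

Lemma bset_perm pi c y : bset (bperm pi c) y <-> bset c (fun i => y (pi i)).
Proof.
elim: c => [i b|c IH|f IH] //=.
- by rewrite IH.
- split; case=> n Hn; exists n; exact/IH.
Qed.

Lemma perm_ideal pi : bijective pi -> forall (A : (nat -> X) -> Prop),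
  in_ideal K Sig SigB A ->
  in_ideal K Sig SigB (fun x => A (fun i => x (pi i))).
Proof.
case=> g Hpg Hgp A.
have E : forall c, bperm pi c = tau pi (fun _ a => a) c.
  by elim=> [i a|c IH|f IH] //=; [rewrite IH | congr BUnion; apply functional_extensionality].
apply: (@in_ideal_tau X D K Sig SigB (prp pi g) (prp g pi) _ _ _ _ _ _ pi (fun _ a => a)).
- exact: prp_cond.
- exact: prp_cond.
- exact: prp_step.
- exact: prp_step.
- move=> p; exact: prp_inv.
- move=> p; exact: prp_inv.
- move=> q i a Hq /=; by rewrite Hpg.
- move=> y Hy; exists (fun i => y (pi i)); split => // c; rewrite -E => Hc.
  exact: (proj2 (bset_perm pi c y) Hc).
Qed.

End Perm.

Theorem proposition1p9 (X : countZmodType) (D : Type)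
    (K : cset X D) (Sig : cset X D -> cset X D) (SigB : creature X D -> cset X D -> Prop) :
  (exists x : X, x != 0%R) ->
  semi_creating_triple K Sig SigB ->
  (plus_invariant K Sig SigB ->
     forall (A : (nat -> X) -> Prop) (x : nat -> X),
       in_ideal K Sig SigB A ->
       in_ideal K Sig SigB (fun y => exists a, A a /\ y = (fun i => (a i + x i)%R))) /\
  (perm_invariant K Sig SigB ->
     forall (pi : nat -> nat), bijective pi ->
     forall (A : (nat -> X) -> Prop),
       in_ideal K Sig SigB A ->
       in_ideal K Sig SigB (fun x => A (fun i => x (pi i)))).
Proof.
move=> _ Htr; split.
- case=> plus [Hp1 [Hp2 Hp3]] A x HA.
  exact: (trans_ideal Htr Hp1 Hp2 Hp3 x HA).
- case=> act [Hq1 Hq2] pi Hpi A HA.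
  exact: (perm_ideal Htr Hq1 Hq2 Hpi HA).
Qed.
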